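(* Fix a null parameter $\theta=(\rho,\gamma,\alpha_1,\beta_1,\dots,\alpha_n,\beta_n)$ satisfying (G1) and (G2), and define the alternative $\tilde\theta=(\rho^{(1)},\gamma^{(1)},\alpha_1,\beta_1,\dots,\alpha_n,\beta_n)$ by $(\rho^{(1)},\gamma^{(1)})=(\rho+\delta_1,\gamma)$ if $\theta$ is in Case (S), and $(\rho^{(1)},\gamma^{(1)})=(\rho+2\delta_2,\gamma-\delta_2)$ if $\theta$ is in Case (L), where $\delta_1,\delta_2$ may depend on $n$. Suppose $e^\rho\|\eta\|_1^2\delta_1^2\to0$ in Case (S) and $\|\mu\|_1\|\nu\|_1\delta_2^2\to0$ in Case (L) (with $\mu,\nu,\eta$ computed under $\theta$). Let $P_0^{(n)}$ and $P_1^{(n)}$ be the distributions of $A$ under $\theta$ and $\tilde\theta$ respectively. Then $\chi^2(P_0^{(n)},P_1^{(n)})\to0$ as $n\to\infty$.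
   Context: Asymptotic framework: $n\to\infty$ and all parameters may depend on $n$. $(x,y)$ is the inner product, $\|x\|_1$ the $\ell^1$ norm, $x_{\max}$ the largest entry. $\chi^2(P,Q)=\sum_x (Q(x)-P(x))^2/P(x)$ is the chi-square divergence. The $p_1$ model: a directed network on nodes $\{1,\dots,n\}$ has adjacency matrix $A\in\{0,1\}^{n\times n}$ with $A_{ii}=0$. The pairs $(A_{ij},A_{ji})$, $1\le i<j\le n$, are independent, and for parameters $\theta=(\rho,\gamma,\alpha_1,\beta_1,\dots,\alpha_n,\beta_n)$ with $\sum_i\alpha_i=\sum_i\beta_i=0$, for $a,b\in\{0,1\}$, $i\ne j$: $\mathbb P(A_{ij}=a,A_{ji}=b)=K_{ij}\exp(a(\gamma+\alpha_i+\beta_j)+b(\gamma+\alpha_j+\beta_i)+ab\rho)$, $K_{ij}=[1+e^{\gamma+\alpha_i+\beta_j}+e^{\gamma+\alpha_j+\beta_i}+e^{2\gamma+\alpha_i+\beta_j+\alpha_j+\beta_i+\rho}]^{-1}$. Let $\mu_i=e^{\gamma/2+\alpha_i}$, $\nu_i=e^{\gamma/2+\beta_i}$, $\eta_i=\mu_i\nu_i$; $\tilde\rho=\log(\|\eta\|_1^2/[(\mu,\eta)(\nu,\eta)])$. Conditions: (G1) $\mu_{\max}\to0$, $\nu_{\max}\to0$, $e^{\rho/2}\eta_{\max}\to0$. (G2) $e^{\rho/2}\|\eta\|_1\to\infty$ and $\|\eta\|_1\to\infty$. Case (S): $e^\rho/e^{\tilde\rho}\to0$; Case (L): $e^\rho\ge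 Ce^{\tilde\rho}$ for a constant $C>0$. *)

(* Defs.v *)
From HB Require Import structures.
From mathcomp Require Import all_boot all_order all_algebra.
From mathcomp Require Import all_classical all_reals all_analysis.
Set Implicit Arguments. Unset Strict Implicit. Unset Printing Implicit Defensive.
Import Order.TTheory GRing.Theory Num.Theory.
Local Open Scope ring_scope.

Section P1.
Variable R : realType.

Definition K_ij n (rho gamma : R) (alpha beta : 'I_n -> R) (i j : 'I_n) : R :=
  (1 + expR (gamma + alpha i + beta j) + expR (gamma + alpha j + beta i)
     + expR (2 * gamma + alpha i + beta j + alpha j + beta i + rho))^-1.

Definition pair_prob n (rho gamma : R) (alpha beta : 'I_n -> R) (i j : 'I_n)
    (a b : bool) : R :=
  K_ij rho gamma alpha beta i j *
  expR ((a%:R) * (gamma + alpha i + beta j) + (b%:R) * (gamma + alpha j + beta i)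
        + (a%:R) * (b%:R) * rho).

Definition p1_prob n (rho gamma : R) (alpha beta : 'I_n -> R)
    (A : 'M[bool]_n) : R :=
  \prod_(i : 'I_n) \prod_(j : 'I_n | (i < j)%N)
     pair_prob rho gamma alpha beta i j (A i j) (A j i).

Definition adjacency n (A : 'M[bool]_n) : bool := [forall i, ~~ A i i].

Definition chi2 n (P Q : 'M[bool]_n -> R) : R :=
  \sum_(A : 'M[bool]_n | adjacency A) (Q A - P A) ^+ 2 / P A.

Definition muv n (gamma : R) (alpha : 'I_n -> R) (i : 'I_n) : R :=
  expR (gamma / 2 + alpha i).
Definition etav n (gamma : R) (alpha beta : 'I_n -> R) (i : 'I_n) : R :=
  muv gamma alpha i * muv gamma beta i.   (* nu = muv gamma beta *)

Definition l1 n (x : 'I_n -> R) : R := \sum_i `|x i|.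
Definition inner n (x y : 'I_n -> R) : R := \sum_i x i * y i.
Definition vmax n (x : 'I_n -> R) : R := \big[Num.max/0]_i x i.

Definition rho_tilde n (gamma : R) (alpha beta : 'I_n -> R) : R :=
  let m := muv gamma alpha in let v := muv gamma beta in
  let e := etav gamma alpha beta in
  ln (l1 e ^+ 2 / (inner m e * inner v e)).

End P1.

(* Main.v *)
Require Import Defs.
From HB Require Import structures.
From mathcomp Require Import all_boot all_order all_algebra.
From mathcomp Require Import all_classical all_reals all_analysis.
From mathcomp Require Import ring lra.
Import Order.TTheory GRing.Theory Num.Theory.
Import numFieldNormedType.Exports.
Local Open Scope classical_set_scope.
Local Open Scope ring_scope.

Section Alg.
Variable R : realType.

Section FactS.
Variable n : nat.

Definition hA (A : 'M[bool]_n) : {ffun 'I_n * 'I_n -> bool * bool} :=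
  [ffun p : 'I_n * 'I_n => if (p.1 < p.2)%N then (A p.1 p.2, A p.2 p.1) else (false,false)].
Definition hf (f : {ffun 'I_n * 'I_n -> bool * bool}) : 'M[bool]_n :=
  \matrix_(i, j) if (i < j)%N then (f (i,j)).1
                 else if (j < i)%N then (f (j,i)).2 else false.
Definition good (f : {ffun 'I_n * 'I_n -> bool * bool}) :=
  [forall p : 'I_n * 'I_n, (p.1 < p.2)%N || (f p == (false,false))].

Lemma prod_pairs (F : 'I_n -> 'I_n -> R) :
  \prod_(i : 'I_n) \prod_(j : 'I_n | (i < j)%N) F i j =
  \prod_(p : 'I_n * 'I_n) (if (p.1 < p.2)%N then F p.1 p.2 else 1).
Proof.
rewrite -(pair_bigA _ (fun i j : 'I_n => if (i < j)%N then F i j else 1)).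
by apply: eq_bigr => i _; rewrite big_mkcond.
Qed.

Lemma factor (g : 'I_n -> 'I_n -> bool -> bool -> R) :
  \sum_(A : 'M[bool]_n | adjacency A)
     \prod_(i : 'I_n) \prod_(j : 'I_n | (i < j)%N) g i j (A i j) (A j i)
  = \prod_(i : 'I_n) \prod_(j : 'I_n | (i < j)%N) \sum_(a : bool) \sum_(b : bool) g i j a b.
Proof.
pose G (p : 'I_n * 'I_n) (ab : bool * bool) : R :=
  if (p.1 < p.2)%N then g p.1 p.2 ab.1 ab.2 else ((ab == (false,false))%:R).
rewrite prod_pairs.
transitivity (\prod_(p : 'I_n * 'I_n) \sum_(ab : bool * bool) G p ab); last first.
  apply: eq_bigr => p _; rewrite /G; case: ifP => _.
    by rewrite (pair_bigA _ (fun a b => g p.1 p.2 a b)).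
  by rewrite (bigD1 (false,false)) //= big1 ?addr0 // => ab /negbTE ->.
rewrite (bigA_distr_bigA G) /=.
rewrite (bigID good) /= [X in _ + X]big1 ?addr0; last first.
  move=> f; rewrite /good => /forallPn [p]; rewrite negb_or => /andP [h1 h2].
  rewrite (bigD1 p) //= /G (negbTE h1) (negbTE h2) mul0r //.
rewrite (reindex_onto hA hf); last first.
  move=> f; rewrite /good => /forallP gf; apply/ffunP => p; rewrite ffunE.
  case: ifP => hp.
    rewrite !mxE hp ltnNge (ltnW hp) /=.
    by case: p hp => i j /=; case: (f (i,j)).
  by have := gf p; rewrite hp /= => /eqP ->.
apply: eq_big => [A|A _].
  have -> : good (hA A).
    rewrite /good.
    apply/forallP => p /=; rewrite ffunE; case: ifP => //.
  rewrite /= /adjacency; apply/forallP/eqP.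
  2: by move=> /matrixP E i; have := E i i; rewrite !mxE ltnn => <- //.
  move=> hd; apply/matrixP => i j; rewrite !mxE !ffunE /=.
  case: ltngtP => // h.
  have -> : i = j by apply/val_inj.
  by rewrite (negbTE (hd j)).
rewrite prod_pairs; apply: eq_bigr => -[i j] _; rewrite /G ffunE /=; case: ifP => // _.
Qed.

End FactS.

Definition cell (c00 c10 c01 c11 : R) (a b : bool) : R :=
  if a then (if b then c11 else c10) else (if b then c01 else c00).

Lemma pp_eq n rho gamma (alpha beta : 'I_n -> R) i j a b :
  pair_prob rho gamma alpha beta i j a b =
  cell 1 (expR (gamma + alpha i + beta j)) (expR (gamma + alpha j + beta i))
       (expR (2 * gamma + alpha i + beta j + alpha j + beta i + rho)) a b /
  (1 + expR (gamma + alpha i + beta j) + expR (gamma + alpha j + beta i)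
     + expR (2 * gamma + alpha i + beta j + alpha j + beta i + rho)).
Proof.
rewrite /pair_prob /K_ij mulrC; congr (_ * _).
have e : forall c : bool, ((c%:R : R) = if c then 1 else 0) by case.
rewrite !e; case: a; case: b => /=;
  rewrite ?mul0r ?mul1r ?add0r ?addr0 ?expR0 //; congr expR; ring.
Qed.

Lemma qsum (c00 c10 c01 c11 e00 e10 e01 e11 : R) :
  0 < c00 -> 0 < c10 -> 0 < c01 -> 0 < c11 ->
  0 < e00 -> 0 < e10 -> 0 < e01 -> 0 < e11 ->
  \sum_(a : bool) \sum_(b : bool)
     (cell e00 e10 e01 e11 a b / (e00 + e10 + e01 + e11)) ^+ 2 /
     (cell c00 c10 c01 c11 a b / (c00 + c10 + c01 + c11))
  = (c00 + c10 + c01 + c11) *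
    (e00 ^+ 2 / c00 + e10 ^+ 2 / c10 + e01 ^+ 2 / c01 + e11 ^+ 2 / c11) /
    (e00 + e10 + e01 + e11) ^+ 2.
Proof.
move=> h1 h2 h3 h4 h5 h6 h7 h8.
have hc : c00 + c10 + c01 + c11 != 0 by apply: lt0r_neq0; lra.
have he : e00 + e10 + e01 + e11 != 0 by apply: lt0r_neq0; lra.
rewrite !big_bool /= /cell /=.
field. by rewrite hc he !lt0r_neq0.
Qed.

Lemma psum (c00 c10 c01 c11 : R) :
  c00 + c10 + c01 + c11 != 0 ->
  \sum_(a : bool) \sum_(b : bool)
     (cell c00 c10 c01 c11 a b / (c00 + c10 + c01 + c11)) = 1.
Proof.
move=> hc; rewrite !big_bool /= /cell /=; field; exact: hc.
Qed.

Lemma keybound (A B m d : R) : 1 <= A -> 0 < B -> 1/2 <= m ->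
  (m - 1) ^+ 2 <= 4 * d ^+ 2 ->
  (A + B) * (A + m ^+ 2 * B) / (A + m * B) ^+ 2 <= 1 + 16 * d ^+ 2 * B.
Proof.
move=> hA hB hm hd.
have hD : 0 < A + m * B by nra.
rewrite ler_pdivrMr ?exprn_gt0 //.
have E : (A + B) * (A + m ^+ 2 * B) = (A + m * B) ^+ 2 + A * B * (m - 1) ^+ 2 by ring.
rewrite E.
have h2 : A <= 2 * (A + m * B) by nra.
have h3 : A * (m - 1) ^+ 2 <= 2 * (A + m * B) * (4 * d ^+ 2).
  apply: (le_trans (y := A * (4 * d ^+ 2))); first by apply: ler_wpM2l; lra.
  apply: ler_wpM2r; [nra | lra].
have h4 : 1 <= A + m * B by nra.
have h5 : 0 <= d ^+ 2 by nra.
have h7 : 0 <= d ^+ 2 * (A + m * B) * (A + m * B - 1).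
  by apply: mulr_ge0; [apply: mulr_ge0; lra | lra].
have h6 : A * (m - 1) ^+ 2 <= 16 * d ^+ 2 * (A + m * B) ^+ 2 by nra.
nra.
Qed.

Lemma exp_bounds (d : R) : d ^+ 2 <= 1/4 ->
  1/2 <= expR d /\ (expR d - 1) ^+ 2 <= 4 * d ^+ 2.
Proof.
move=> hd.
have h1 := expR_ge1Dx d.
have h2 := expR_ge1Dx (- d).
rewrite expRN in h2.
have hE := expR_gt0 d.
have hd2 : -1/2 <= d <= 1/2 by apply/andP; split; nra.
have h3 : (1 - d) * expR d <= 1.
  by have := ler_wpM2r (ltW hE) h2; rewrite mulVf ?lt0r_neq0.
split; first nra.
have [dpos|dneg] := lerP 0 d; nra.
Qed.

Lemma prod_sq_div n (F G : 'I_n -> 'I_n -> R) :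
  \prod_(i : 'I_n) \prod_(j : 'I_n | (i < j)%N) (F i j ^+ 2 / G i j) =
  (\prod_(i : 'I_n) \prod_(j : 'I_n | (i < j)%N) F i j) ^+ 2 /
  \prod_(i : 'I_n) \prod_(j : 'I_n | (i < j)%N) G i j.
Proof.
rewrite -prodrXl -prodf_div; apply: eq_bigr => i _.
by rewrite -prodrXl -prodf_div.
Qed.

Lemma chi2_prod n (p q : 'I_n -> 'I_n -> bool -> bool -> R) (P Q : 'M[bool]_n -> R) :
  (forall A, P A = \prod_(i : 'I_n) \prod_(j : 'I_n | (i < j)%N) p i j (A i j) (A j i)) ->
  (forall A, Q A = \prod_(i : 'I_n) \prod_(j : 'I_n | (i < j)%N) q i j (A i j) (A j i)) ->
  (forall i j a b, 0 < p i j a b) ->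
  (forall i j, \sum_(a : bool) \sum_(b : bool) p i j a b = 1) ->
  (forall i j, \sum_(a : bool) \sum_(b : bool) q i j a b = 1) ->
  chi2 P Q
  = \prod_(i : 'I_n) \prod_(j : 'I_n | (i < j)%N)
      (\sum_(a : bool) \sum_(b : bool) q i j a b ^+ 2 / p i j a b) - 1.
Proof.
move=> hPd hQd hp hsp hsq; rewrite /chi2.
have hP : forall A, 0 < P A by move=> A; rewrite hPd; apply: prodr_gt0 => i _; apply: prodr_gt0.
transitivity (\sum_(A : 'M[bool]_n | adjacency A) (Q A ^+ 2 / P A)
   - 2 * \sum_(A : 'M[bool]_n | adjacency A) Q A + \sum_(A : 'M[bool]_n | adjacency A) P A).
  rewrite mulr_sumr -sumrN -!big_split /=; apply: eq_bigr => A _.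
  by field; apply: lt0r_neq0.
have -> : \sum_(A : 'M[bool]_n | adjacency A) Q A = 1.
  under eq_bigr => A _ do rewrite hQd.
  by rewrite factor big1 // => i _; rewrite big1.
have -> : \sum_(A : 'M[bool]_n | adjacency A) P A = 1.
  under eq_bigr => A _ do rewrite hPd.
  by rewrite factor big1 // => i _; rewrite big1.
under eq_bigr => A _ do rewrite hPd hQd -prod_sq_div.
rewrite (@factor n (fun i j a b => q i j a b ^+ 2 / p i j a b)).
ring.
Qed.

Lemma chi2_ge0 n (P Q : 'M[bool]_n -> R) : (forall A, 0 < P A) -> 0 <= chi2 P Q.
Proof.
move=> hP; apply: sumr_ge0 => A _; apply: divr_ge0; [exact: sqr_ge0 | exact: ltW].
Qed.

Lemma prod_bound n (S c : 'I_n -> 'I_n -> R) :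
  (forall i j, 0 <= S i j <= 1 + c i j) ->
  \prod_(i : 'I_n) \prod_(j : 'I_n | (i < j)%N) S i j <=
  expR (\sum_(i : 'I_n) \sum_(j : 'I_n | (i < j)%N) c i j).
Proof.
move=> h; rewrite expR_sum; apply: ler_prod => i _; apply/andP; split.
  by apply: prodr_ge0 => j _; case/andP: (h i j).
rewrite expR_sum; apply: ler_prod => j _; case/andP: (h i j) => -> /= h2.
exact: (le_trans h2 (expR_ge1Dx _)).
Qed.

Lemma sum_filter_le (I : finType) (P : pred I) (F : I -> R) :
  (forall i, 0 <= F i) -> \sum_(i | P i) F i <= \sum_i F i.
Proof.
move=> h; rewrite [X in _ <= X](bigID P) /= lerDl; exact: sumr_ge0.
Qed.


Lemma etaE n gamma (alpha beta : 'I_n -> R) i : 0 <= etav gamma alpha beta i.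
Proof. by rewrite /etav /muv; apply: mulr_ge0; apply: expR_ge0. Qed.

Lemma l1_pos n (x : 'I_n -> R) : (forall i, 0 <= x i) -> l1 x = \sum_i x i.
Proof. by move=> h; rewrite /l1; apply: eq_bigr => i _; rewrite ger0_norm. Qed.

Lemma sum_sq n (a : 'I_n -> R) : (\sum_i a i) ^+ 2 = \sum_i \sum_j a i * a j.
Proof. by rewrite expr2 mulr_suml; apply: eq_bigr => i _; rewrite mulr_sumr. Qed.

Lemma chi2_S n rho gamma delta (alpha beta : 'I_n -> R) : delta ^+ 2 <= 1/4 ->
  chi2 (p1_prob rho gamma alpha beta) (p1_prob (rho + delta) gamma alpha beta)
  <= expR (16 * delta ^+ 2 * (expR rho * l1 (etav gamma alpha beta) ^+ 2)) - 1.
Proof.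
move=> hd.
have [hm1 hm2] := @exp_bounds delta hd.
rewrite (@chi2_prod n (pair_prob rho gamma alpha beta) (pair_prob (rho + delta) gamma alpha beta)) //; first last.
- move=> i j; under eq_bigr => a _ do under eq_bigr => b _ do rewrite pp_eq.
  by rewrite psum // lt0r_neq0 // ?addr_gt0 ?expR_gt0 ?ltr01.
- move=> i j; under eq_bigr => a _ do under eq_bigr => b _ do rewrite pp_eq.
  by rewrite psum // lt0r_neq0 // ?addr_gt0 ?expR_gt0 ?ltr01.
- move=> i j a b; rewrite pp_eq; apply: divr_gt0; last by rewrite ?addr_gt0 ?expR_gt0 ?ltr01.
  by rewrite /cell; case: a; case: b; rewrite ?expR_gt0 ?ltr01.
rewrite lerD2r.
apply: (le_trans (@prod_bound n _ (fun i j => 16 * delta ^+ 2 *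
   (expR rho * (etav gamma alpha beta i * etav gamma alpha beta j))) _)).
  move=> i j.
  under eq_bigr => a _ do under eq_bigr => b _ do rewrite !pp_eq.
  set X := expR (gamma + alpha i + beta j).
  set Y := expR (gamma + alpha j + beta i).
  set W := expR (2 * gamma + alpha i + beta j + alpha j + beta i + rho).
  have hW : expR (2 * gamma + alpha i + beta j + alpha j + beta i + (rho + delta))
     = W * expR delta by rewrite /W -expRD; congr expR; ring.
  have hX : 0 < X := expR_gt0 _.
  have hY : 0 < Y := expR_gt0 _.
  have hWp : 0 < W := expR_gt0 _.
  have hm : 0 < expR delta := expR_gt0 _.
  have hWm : 0 < W * expR delta by apply: mulr_gt0.
  rewrite hW qsum ?ltr01 //.
  have -> : (1 + X + Y + W) * (1 ^+ 2 / 1 + X ^+ 2 / X + Y ^+ 2 / Y + (W * expR delta) ^+ 2 / W) /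
     (1 + X + Y + W * expR delta) ^+ 2 =
     ((1 + X + Y) + W) * ((1 + X + Y) + expR delta ^+ 2 * W) / ((1 + X + Y) + expR delta * W) ^+ 2.
    have hmW : 0 < expR delta * W by apply: mulr_gt0.
    field; rewrite !lt0r_neq0 //; lra.
  have -> : expR rho * (etav gamma alpha beta i * etav gamma alpha beta j) = W.
    by rewrite /W /etav /muv -!expRD; congr expR; lra.
  apply/andP; split.
    have h2W : 0 <= expR delta ^+ 2 * W by apply: mulr_ge0; [apply: sqr_ge0 | lra].
    by apply: divr_ge0; [apply: mulr_ge0; lra | apply: sqr_ge0].
  apply: keybound; [lra | exact: hWp | exact: hm1 | exact: hm2].
rewrite ler_expR.
apply: (le_trans (y := \sum_i \sum_j 16 * delta ^+ 2 *
   (expR rho * (etav gamma alpha beta i * etav gamma alpha beta j)))).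
  apply: ler_sum => i _; apply: sum_filter_le => j.
  by apply: mulr_ge0; [apply: mulr_ge0; [lra | apply: sqr_ge0] | apply: mulr_ge0; [apply: expR_ge0 | apply: mulr_ge0; apply: etaE]].
rewrite (@l1_pos n _ (@etaE n gamma alpha beta)) sum_sq mulr_sumr mulr_sumr le_eqVlt; apply/orP; left; apply/eqP.
apply: eq_bigr => i _; rewrite mulr_sumr mulr_sumr; done.
Qed.

Lemma sum_sym_le n (a : 'I_n -> 'I_n -> R) : (forall i j, 0 <= a i j) ->
  \sum_(i : 'I_n) \sum_(j : 'I_n | (i < j)%N) (a i j + a j i) <= \sum_i \sum_j a i j.
Proof.
move=> ha.
have -> : \sum_(i : 'I_n) \sum_(j : 'I_n | (i < j)%N) (a i j + a j i) =
   \sum_(i : 'I_n) \sum_(j : 'I_n) (if (i < j)%N then a i j else 0)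
 + \sum_(i : 'I_n) \sum_(j : 'I_n) (if (i < j)%N then a j i else 0).
  rewrite -big_split; apply: eq_bigr => i _; rewrite big_split /= -!big_mkcond //.
rewrite [X in _ + X](exchange_big) /= -big_split; apply: ler_sum => i _.
rewrite -big_split; apply: ler_sum => j _ /=.
case: ltngtP => _; rewrite ?addr0 ?add0r //; exact: ha.
Qed.

Lemma chi2_L n rho gamma delta (alpha beta : 'I_n -> R) : delta ^+ 2 <= 1/4 ->
  chi2 (p1_prob rho gamma alpha beta) (p1_prob (rho + 2 * delta) (gamma - delta) alpha beta)
  <= expR (16 * delta ^+ 2 * (l1 (muv gamma alpha) * l1 (muv gamma beta))) - 1.
Proof.
move=> hd.
have hd' : (- delta) ^+ 2 <= 1/4 by rewrite sqrrN.
have [hm1 hm2] := @exp_bounds (- delta) hd'.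
rewrite sqrrN in hm2.
rewrite (@chi2_prod n (pair_prob rho gamma alpha beta) (pair_prob (rho + 2 * delta) (gamma - delta) alpha beta)) //; first last.
- move=> i j; under eq_bigr => a _ do under eq_bigr => b _ do rewrite pp_eq.
  by rewrite psum // lt0r_neq0 // ?addr_gt0 ?expR_gt0 ?ltr01.
- move=> i j; under eq_bigr => a _ do under eq_bigr => b _ do rewrite pp_eq.
  by rewrite psum // lt0r_neq0 // ?addr_gt0 ?expR_gt0 ?ltr01.
- move=> i j a b; rewrite pp_eq; apply: divr_gt0; last by rewrite ?addr_gt0 ?expR_gt0 ?ltr01.
  by rewrite /cell; case: a; case: b; rewrite ?expR_gt0 ?ltr01.
rewrite lerD2r.
pose aa i j := muv gamma alpha i * muv gamma beta j.
apply: (le_trans (@prod_bound n _ (fun i j => 16 * delta ^+ 2 * (aa i j + aa j i)) _)).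
  move=> i j.
  under eq_bigr => a _ do under eq_bigr => b _ do rewrite !pp_eq.
  set X := expR (gamma + alpha i + beta j).
  set Y := expR (gamma + alpha j + beta i).
  set W := expR (2 * gamma + alpha i + beta j + alpha j + beta i + rho).
  set m := expR (- delta).
  have hX' : expR (gamma - delta + alpha i + beta j) = X * m
    by rewrite /X /m -expRD; congr expR; ring.
  have hY' : expR (gamma - delta + alpha j + beta i) = Y * m
    by rewrite /Y /m -expRD; congr expR; ring.
  have hW' : expR (2 * (gamma - delta) + alpha i + beta j + alpha j + beta i + (rho + 2 * delta))
     = W by rewrite /W; congr expR; ring.
  have hX : 0 < X := expR_gt0 _.
  have hY : 0 < Y := expR_gt0 _.
  have hWp : 0 < W := expR_gt0 _.
  have hm : 0 < m := expR_gt0 _.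
  have hXm : 0 < X * m by apply: mulr_gt0.
  have hYm : 0 < Y * m by apply: mulr_gt0.
  rewrite hX' hY' hW' qsum ?ltr01 //.
  have -> : (1 + X + Y + W) * (1 ^+ 2 / 1 + (X * m) ^+ 2 / X + (Y * m) ^+ 2 / Y + W ^+ 2 / W) /
     (1 + X * m + Y * m + W) ^+ 2 =
     ((1 + W) + (X + Y)) * ((1 + W) + m ^+ 2 * (X + Y)) / ((1 + W) + m * (X + Y)) ^+ 2.
    have hmXY : 0 < m * (X + Y) by apply: mulr_gt0 => //; lra.
    have hZ : 1 + X * m + Y * m + W != 0 by apply: lt0r_neq0; lra.
    field; rewrite !lt0r_neq0 //=; try lra.
  have -> : aa i j + aa j i = X + Y.
    by rewrite /aa /X /Y /muv -!expRD; congr (expR _ + expR _); lra.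
  apply/andP; split.
    have h2W : 0 <= m ^+ 2 * (X + Y) by apply: mulr_ge0; [apply: sqr_ge0 | lra].
    by apply: divr_ge0; [apply: mulr_ge0; lra | apply: sqr_ge0].
  apply: keybound; [lra | lra | exact: hm1 | exact: hm2].
rewrite ler_expR.
have h16 : 0 <= 16 * delta ^+ 2 by apply: mulr_ge0; [lra | apply: sqr_ge0].
have -> : \sum_(i : 'I_n) \sum_(j : 'I_n | (i < j)%N) 16 * delta ^+ 2 * (aa i j + aa j i)
   = 16 * delta ^+ 2 * \sum_(i : 'I_n) \sum_(j : 'I_n | (i < j)%N) (aa i j + aa j i).
  by rewrite mulr_sumr; apply: eq_bigr => i _; rewrite mulr_sumr.
apply: ler_wpM2l => //.
have hmu : forall (x : 'I_n -> R) i, 0 <= muv gamma x i by move=> x i; apply: expR_ge0.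
have -> : l1 (muv gamma alpha) * l1 (muv gamma beta) = \sum_i \sum_j aa i j.
  rewrite (@l1_pos n _ (hmu alpha)) (@l1_pos n _ (hmu beta)) mulr_suml.
  by apply: eq_bigr => i _; rewrite mulr_sumr.
apply: sum_sym_le => i j; apply: mulr_ge0; apply: hmu.
Qed.

Lemma p1_pos n rho gamma (alpha beta : 'I_n -> R) A : 0 < p1_prob rho gamma alpha beta A.
Proof.
rewrite /p1_prob; apply: prodr_gt0 => i _; apply: prodr_gt0 => j _.
rewrite pp_eq; apply: divr_gt0; last by rewrite ?addr_gt0 ?expR_gt0 ?ltr01.
by rewrite /cell; case: (A i j); case: (A j i); rewrite ?expR_gt0 ?ltr01.
Qed.

Lemma l1_eta_le n gamma (alpha beta : 'I_n -> R) :
  l1 (etav gamma alpha beta) <= l1 (muv gamma alpha) * l1 (muv gamma beta).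
Proof.
have hmu : forall (x : 'I_n -> R) i, 0 <= muv gamma x i by move=> x i; apply: expR_ge0.
rewrite (@l1_pos n _ (@etaE n gamma alpha beta)) (@l1_pos n _ (hmu alpha)) (@l1_pos n _ (hmu beta)).
rewrite mulr_suml; apply: ler_sum => i _; rewrite mulr_sumr (bigD1 i) //= lerDl.
by apply: sumr_ge0 => j _; apply: mulr_ge0; apply: hmu.
Qed.

End Alg.


Theorem theorem3 (R : realType)
  (rho gamma delta1 delta2 rho1 gamma1 : nat -> R)
  (alpha beta : forall n : nat, 'I_n -> R)
  (Halpha : forall n, \sum_(i < n) alpha n i = 0)
  (Hbeta : forall n, \sum_(i < n) beta n i = 0)
  (* (G1) *)
  (G1mu : (fun n => vmax (muv (gamma n) (alpha n))) @ \oo --> (0 : R))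
  (G1nu : (fun n => vmax (muv (gamma n) (beta n))) @ \oo --> (0 : R))
  (G1eta : (fun n => expR (rho n / 2) * vmax (etav (gamma n) (alpha n) (beta n)))
             @ \oo --> (0 : R))
  (* (G2) *)
  (G2a : (fun n => expR (rho n / 2) * l1 (etav (gamma n) (alpha n) (beta n)))
           @ \oo --> +oo)
  (G2b : (fun n => l1 (etav (gamma n) (alpha n) (beta n))) @ \oo --> +oo)
  (Hcase :
     (* Case (S) *)
     ((fun n => expR (rho n) / expR (rho_tilde (gamma n) (alpha n) (beta n)))
         @ \oo --> (0 : R)
      /\ (forall n, rho1 n = rho n + delta1 n /\ gamma1 n = gamma n)
      /\ (fun n => expR (rho n) * l1 (etav (gamma n) (alpha n) (beta n)) ^+ 2
                   * delta1 n ^+ 2) @ \oo --> (0 : R))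
     \/
     (* Case (L) *)
     ((exists2 C : R, 0 < C & \forall n \near \oo,
          C * expR (rho_tilde (gamma n) (alpha n) (beta n)) <= expR (rho n))
      /\ (forall n, rho1 n = rho n + 2 * delta2 n /\ gamma1 n = gamma n - delta2 n)
      /\ (fun n => l1 (muv (gamma n) (alpha n)) * l1 (muv (gamma n) (beta n))
                   * delta2 n ^+ 2) @ \oo --> (0 : R))) :
  (fun n => chi2 (p1_prob (rho n) (gamma n) (alpha n) (beta n))
                 (p1_prob (rho1 n) (gamma1 n) (alpha n) (beta n)))
    @ \oo --> (0 : R).
Proof.
have chi0 : forall n, 0 <= chi2 (p1_prob (rho n) (gamma n) (alpha n) (beta n))
                 (p1_prob (rho1 n) (gamma1 n) (alpha n) (beta n)).
  by move=> n; apply: chi2_ge0 => A; apply: p1_pos.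
case: Hcase => [[_ [Hp Hl]] | [_ [Hp Hl]]].
- set g := fun n => expR (rho n) * l1 (etav (gamma n) (alpha n) (beta n)) ^+ 2 * delta1 n ^+ 2.
  have Ed : \forall n \near \oo, delta1 n ^+ 2 <= 1/4.
    have /cvgryPge E1 := G2a.
    have E2 : \forall n \near \oo, g n <= 1.
      move/cvgrPdist_le: Hl => /(_ 1 ltr01); apply: filterS => n.
      by rewrite sub0r normrN => h; exact: le_trans (ler_norm _) h.
    apply: filterS2 (E1 2) E2 => n h1 h2.
    have eL : g n = (expR (rho n / 2) * l1 (etav (gamma n) (alpha n) (beta n))) ^+ 2 * delta1 n ^+ 2.
      rewrite /g exprMn [expR (rho n / 2) ^+ 2]expr2 -expRD; congr (expR _ * _ * _); lra.
    rewrite eL in h2.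
    set e := expR (rho n / 2) * l1 (etav (gamma n) (alpha n) (beta n)) in h1 h2.
    have h3 : 0 <= (e ^+ 2 - 4) * delta1 n ^+ 2 by apply: mulr_ge0; [nra | apply: sqr_ge0].
    nra.
  have H16 : (16 * g x) @[x --> \oo] --> (16 * 0 : R) by apply: cvgMl_tmp.
  have Hexp : (expR (16 * g x)) @[x --> \oo] --> expR (16 * 0 : R).
    by apply: continuous_cvg => //; apply: continuous_expR.
  have Hup : (expR (16 * g x) - 1) @[x --> \oo] --> (expR (16 * 0 : R) - 1).
    by apply: cvgB => //; apply: cvg_cst.
  rewrite mulr0 expR0 subrr in Hup.
  apply: (squeeze_cvgr _ (cvg_cst 0) Hup).
  apply: filterS Ed => n hd; rewrite chi0 /=.
  have [-> ->] := Hp n.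
  have -> : 16 * (expR (rho n) * l1 (etav (gamma n) (alpha n) (beta n)) ^+ 2 * delta1 n ^+ 2)
    = 16 * delta1 n ^+ 2 * (expR (rho n) * l1 (etav (gamma n) (alpha n) (beta n)) ^+ 2) by ring.
  exact: chi2_S.
- set g := fun n => l1 (muv (gamma n) (alpha n)) * l1 (muv (gamma n) (beta n)) * delta2 n ^+ 2.
  have Ed : \forall n \near \oo, delta2 n ^+ 2 <= 1/4.
    have /cvgryPge E1 := G2b.
    have E2 : \forall n \near \oo, g n <= 1.
      move/cvgrPdist_le: Hl => /(_ 1 ltr01); apply: filterS => n.
      by rewrite sub0r normrN => h; exact: le_trans (ler_norm _) h.
    apply: filterS2 (E1 4) E2 => n h1 h2.
    have h0 := @l1_eta_le R _ (gamma n) (alpha n) (beta n).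
    rewrite /g in h2.
    set e := l1 (muv (gamma n) (alpha n)) * l1 (muv (gamma n) (beta n)) in h0 h2.
    have h3 : 0 <= (e - 4) * delta2 n ^+ 2 by apply: mulr_ge0; [lra | apply: sqr_ge0].
    nra.
  have H16 : (16 * g x) @[x --> \oo] --> (16 * 0 : R) by apply: cvgMl_tmp.
  have Hexp : (expR (16 * g x)) @[x --> \oo] --> expR (16 * 0 : R).
    by apply: continuous_cvg => //; apply: continuous_expR.
  have Hup : (expR (16 * g x) - 1) @[x --> \oo] --> (expR (16 * 0 : R) - 1).
    by apply: cvgB => //; apply: cvg_cst.
  rewrite mulr0 expR0 subrr in Hup.
  apply: (squeeze_cvgr _ (cvg_cst 0) Hup).
  apply: filterS Ed => n hd; rewrite chi0 /=.
  have [-> ->] := Hp n.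
  have -> : 16 * (l1 (muv (gamma n) (alpha n)) * l1 (muv (gamma n) (beta n)) * delta2 n ^+ 2)
    = 16 * delta2 n ^+ 2 * (l1 (muv (gamma n) (alpha n)) * l1 (muv (gamma n) (beta n))) by ring.
  exact: chi2_L.
Qed.
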